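(* Let $\ell, c \in \mathbb{N}$. For any directed graphs $G$ and $H$ with nodes $u$ and $v$ respectively, the following holds: $G,u \equiv_{\text{C}^2_{\ell, c}} H,v$ if and only if $W^\ell_c(u) = W^\ell_c(v)$.
   Context: A directed graph of dimension $d$ is $G=(V,E,\lambda)$ with finite node set $V$, edge set $E \subseteq V\times V$ without loops $(v,v)$, and labelling $\lambda: V \to \{0,1\}^d$. The in-neighbourhood $\overleftarrow{N}_G(v)$ is the set of $w$ with $(w,v)\in E$, the out-neighbourhood $\overrightarrow{N}_G(v)$ is the set of $w$ with $(v,w)\in E$, and $N_G(v)=\overleftarrow{N}_G(v)\cup\overrightarrow{N}_G(v)$. Graphs are viewed as first-order structures with unary predicates $P_1,\dots,P_d$ ($P_i$ holds at $v$ iff $\lambda(v)_i=1$) and binary predicate $E$. $\text{C}^2$ is the two-variable fragment of first-order logic with equality extended by counting quantifiers $\exists_k$ (''there exist at least $k$ distinct elements such that''). $\text{C}^2_{\ell,c}$ is the set of $\text{C}^2$ formulas of quantifier depth at most $\ell$ in which every counting quantifier $\exists_k$ has $k \le c$. $G,u \equiv_{\text{C}^2_{\ell,c}} H,v$ means that for every $\text{C}^2_{\ell,c}$ formula $\varphi(x)$ with one free variable, $G\models\varphi(u)$ iff $H\models\varphi(v)$. For a multiset $M$, the $c$-bounded multiset $\{\!\{\cdot\}\!\}^c$ is obtained by reducing every multiplicity to at most $c$ (e.g. $\{\!\{7,7,7,3\}\!\}^2=\{\!\{7,7,3\}\!\}$). The $c$-bounded WL algorithm computes, for all nodes $v$ of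 a graph $G$: $W^0_c(v)=\lambda(v)$ and $W^{\ell+1}_c(v) = \big( W^\ell_c(v),\ \{\!\{ W^\ell_c(w) \}\!\}^c_{w \in \overleftarrow{N}_G(v) \cap \overrightarrow{N}_G(v)},\ \{\!\{ W^\ell_c(w) \}\!\}^c_{w \in \overleftarrow{N}_G(v) \setminus \overrightarrow{N}_G(v)},\ \{\!\{ W^\ell_c(w) \}\!\}^c_{w \in \overrightarrow{N}_G(v) \setminus \overleftarrow{N}_G(v)},\ \{\!\{ W^\ell_c(w) \}\!\}^c_{w \in V \setminus (N_G(v) \cup \{v\})} \big)$. *)

(* Defs.v *)
From HB Require Import structures.
From mathcomp Require Import all_boot.
From mathcomp Require Import finmap multiset.

Set Implicit Arguments.
Unset Strict Implicit.
Unset Printing Implicit Defensive.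

Local Open Scope fset_scope.
Local Open Scope mset_scope.
Local Open Scope nat_scope.

Record digraph (d : nat) := Digraph {
  node :> finType;
  edge : rel node;
  edge_irr : irreflexive edge;
  label : node -> d.-tuple bool
}.

Inductive var := VX | VY.

Definition var_eqb (a b : var) : bool :=
  match a, b with VX, VX | VY, VY => true | _, _ => false end.

Inductive C2form (d : nat) :=
| CP   of 'I_d & var
| CE   of var & var
| CEq  of var & var
| CNot of C2form d
| CAnd of C2form d & C2form d
| COr  of C2form d & C2form d
| CEx  of nat & var & C2form d.

Arguments CNot {d}. Arguments CAnd {d}. Arguments COr {d}. Arguments CEx {d}.

Fixpoint qdepth d (f : C2form d) : nat :=
  match f with
  | CP _ _ | CE _ _ | CEq _ _ => 0
  | CNot g => qdepth g
  | CAnd g h | COr g h => maxn (qdepth g) (qdepth h)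
  | CEx _ _ g => (qdepth g).+1
  end.

Fixpoint counts_le d (c : nat) (f : C2form d) : bool :=
  match f with
  | CP _ _ | CE _ _ | CEq _ _ => true
  | CNot g => counts_le c g
  | CAnd g h | COr g h => counts_le c g && counts_le c h
  | CEx k _ g => (k <= c) && counts_le c g
  end.

Fixpoint free_in d (z : var) (f : C2form d) : bool :=
  match f with
  | CP _ a => var_eqb z a
  | CE a b | CEq a b => var_eqb z a || var_eqb z b
  | CNot g => free_in z g
  | CAnd g h | COr g h => free_in z g || free_in z h
  | CEx _ a g => ~~ var_eqb z a && free_in z g
  end.

Definition C2lc_unary d (l c : nat) (f : C2form d) : bool :=
  [&& qdepth f <= l, counts_le c f & ~~ free_in VY f].

Section Sem.
Variables (d : nat) (G : digraph d).

Definition look (a b : G) (z : var) : G := match z with VX => a | VY => b end.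

Fixpoint sat (a b : G) (f : C2form d) {struct f} : bool :=
  match f with
  | CP i z => tnth (label (look a b z)) i
  | CE z z' => edge (look a b z) (look a b z')
  | CEq z z' => look a b z == look a b z'
  | CNot g => ~~ sat a b g
  | CAnd g h => sat a b g && sat a b h
  | COr g h => sat a b g || sat a b h
  | CEx k VX g => k <= #|[pred w : G | sat w b g]|
  | CEx k VY g => k <= #|[pred w : G | sat a w g]|
  end.

(* G |= phi(u) for a formula with free variable x (y is not free, so its
   value is irrelevant; we set it to u). *)
Definition models1 (u : G) (f : C2form d) : bool := sat u u f.
End Sem.

Definition C2_equiv d (l c : nat) (G : digraph d) (u : G) (H : digraph d) (v : H) :=
  forall f : C2form d, C2lc_unary l c f -> (models1 u f <-> models1 v f).

Fixpoint colT (d n : nat) : choiceType :=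
  match n with
  | 0 => (d.-tuple bool : choiceType)
  | n.+1 => ((colT d n * {mset colT d n} * {mset colT d n}
              * {mset colT d n} * {mset colT d n})%type : choiceType)
  end.

Definition bmset (K : choiceType) (c : nat) (s : seq K) : {mset K} :=
  ([fsfun x in [fset x in s] => minn c (count_mem x s)] : {mset K}).

Section WL.
Variables (d c : nat) (G : digraph d).

Definition bmset_of n (W : G -> colT d n) (P : pred G) : {mset colT d n} :=
  bmset c [seq W w | w <- enum P].

Fixpoint wl (n : nat) : G -> colT d n :=
  match n return G -> colT d n with
  | 0 => fun v => label v
  | n.+1 => fun v =>
      (wl n v,
       bmset_of (wl n) [pred w | edge w v && edge v w],
       bmset_of (wl n) [pred w | edge w v && ~~ edge v w],
       bmset_of (wl n) [pred w | edge v w && ~~ edge w v],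
       bmset_of (wl n) [pred w | ~~ edge w v && ~~ edge v w && (w != v)])
  end.
End WL.

(* Main.v *)
Require Import Defs.
From mathcomp Require Import all_boot.
From mathcomp Require Import finmap multiset.
From mathcomp Require Import zify.

Set Implicit Arguments.
Unset Strict Implicit.
Unset Printing Implicit Defensive.
Local Open Scope nat_scope.


Lemma sum_bool (T : Type) (s : seq T) (P : pred T) : \sum_(x <- s) (P x : nat) = count P s.
Proof. by elim: s => [|a s IH]; rewrite ?big_nil ?big_cons //= IH. Qed.

Lemma count_sum (T : eqType) (u r : seq T) (q : pred T) :
  uniq u -> {subset r <= u} -> count q r = \sum_(x <- u | q x) count_mem x r.
Proof.
move=> Uu; elim: r => [|y r IH] sub /=.
  by rewrite big1.
rewrite IH; last by move=> z zr; apply: sub; rewrite inE zr ?orbT.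
under [RHS]eq_bigr => x _ do rewrite eq_sym.
rewrite big_split /=; congr (_ + _); rewrite -big_filter sum_bool count_uniq_mem ?filter_uniq //.
by rewrite mem_filter sub ?mem_head // andbT.
Qed.

Lemma minn_cap_add c a b : minn c (a + b) = minn c (minn c a + minn c b).
Proof. lia. Qed.

Lemma minn_cap_sum (T : Type) c (u : seq T) (P : pred T) F :
  minn c (\sum_(x <- u | P x) F x) = minn c (\sum_(x <- u | P x) minn c (F x)).
Proof.
elim: u => [|y u IH]; rewrite ?big_nil ?big_cons //.
case: (P y) => //.
by rewrite minn_cap_add IH [RHS]minn_cap_add; lia.
Qed.

Lemma capcount_mem (T : eqType) c (r1 r2 : seq T) (q : pred T) :
  (forall x, minn c (count_mem x r1) = minn c (count_mem x r2)) ->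
  minn c (count q r1) = minn c (count q r2).
Proof.
move=> E; set u := undup (r1 ++ r2).
have Uu : uniq u by apply: undup_uniq.
rewrite (@count_sum _ u r1) // ?(@count_sum _ u r2) //; last first.
- by move=> z zr; rewrite mem_undup mem_cat zr ?orbT.
- by move=> z zr; rewrite mem_undup mem_cat zr ?orbT.
rewrite minn_cap_sum [RHS]minn_cap_sum; congr minn.
by apply: eq_bigr => x _; rewrite E.
Qed.

Lemma bmsetE (K : choiceType) c (s : seq K) x :
  (bmset c s : {fsfun K -> nat with 0}) x = minn c (count_mem x s).
Proof.
rewrite /bmset fsfunE inE /=; case: ifPn => // /count_memPn ->; by rewrite minn0.
Qed.

Lemma bmsetP (K : choiceType) c (s1 s2 : seq K) :
  bmset c s1 = bmset c s2 <-> forall x, minn c (count_mem x s1) = minn c (count_mem x s2).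
Proof.
split=> [E x|E]; first by rewrite -!bmsetE E.
by apply/fsfunP => x; rewrite !bmsetE.
Qed.

Lemma capcount (T1 T2 K : eqType) c (s1 : seq T1) (s2 : seq T2) (W1 : T1 -> K) (W2 : T2 -> K)
  (p1 : pred T1) (p2 : pred T2) :
 (forall x, minn c (count_mem x (map W1 s1)) = minn c (count_mem x (map W2 s2))) ->
 (forall x y, x \in s1 -> y \in s2 -> W1 x = W2 y -> p1 x = p2 y) ->
 (forall x x', x \in s1 -> x' \in s1 -> W1 x = W1 x' -> p1 x = p1 x') ->
 (forall y y', y \in s2 -> y' \in s2 -> W2 y = W2 y' -> p2 y = p2 y') ->
 minn c (count p1 s1) = minn c (count p2 s2).
Proof.
move=> E H12 H1 H2.
pose q col := has (fun x => (W1 x == col) && p1 x) s1 || has (fun y => (W2 y == col) && p2 y) s2.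
have -> : count p1 s1 = count q (map W1 s1).
  rewrite count_map; apply: eq_in_count => x xs /=.
  case p1x: (p1 x).
    by symmetry; apply/orP; left; apply/hasP; exists x => //; rewrite eqxx p1x.
  symmetry; apply/negbTE; rewrite negb_or; apply/andP; split; apply/hasPn => z zs;
    rewrite negb_and; case: eqP => //= e.
    by rewrite (H1 z x zs xs e) p1x.
  by rewrite -(H12 x z xs zs (esym e)) p1x.
have -> : count p2 s2 = count q (map W2 s2).
  rewrite count_map; apply: eq_in_count => y ys /=.
  case p2y: (p2 y).
    by symmetry; apply/orP; right; apply/hasP; exists y => //; rewrite eqxx p2y.
  symmetry; apply/negbTE; rewrite negb_or; apply/andP; split; apply/hasPn => z zs;
    rewrite negb_and; case: eqP => //= e.
    by rewrite (H12 z y zs ys e) p2y.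
  by rewrite (H2 z y zs ys e) p2y.
exact: capcount_mem.
Qed.

Definition tp (e1 e2 q : bool) : nat :=
  if q then 0 else if e1 && e2 then 1 else if e1 then 2 else if e2 then 3 else 4.

Definition catp d (G : digraph d) (i : nat) (b w : G) : bool :=
  tp (edge w b) (edge b w) (w == b) == i.

Lemma tp_lt5 e1 e2 q : tp e1 e2 q < 5.
Proof. by rewrite /tp; case: q; case: e1; case: e2. Qed.

Lemma tp_inj e1 e2 q e1' e2' q' : tp e1 e2 q = tp e1' e2' q' -> tp e1 e2 q != 0 ->
  [/\ e1 = e1', e2 = e2' & q = q'].
Proof. by rewrite /tp; case: q; case: q'; case: e1; case: e2; case: e1'; case: e2'. Qed.

Lemma wl_succ d c (G : digraph d) n (v : G) :
  wl c n.+1 v = (wl c n v, bmset_of c (wl c n) (catp 1 v), bmset_of c (wl c n) (catp 2 v),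
                 bmset_of c (wl c n) (catp 3 v), bmset_of c (wl c n) (catp 4 v)).
Proof.
rewrite /=; rewrite /bmset_of.
have irr := @edge_irr d G.
congr (_, _, _, _, _); congr bmset; congr map; apply: eq_enum => w; rewrite !inE /in_mem /= /catp /tp;
 case: (eqVneq w v) => [->|_]; rewrite ?irr //=; by case: (edge w v); case: (edge v w).
Qed.

Lemma wl_pred d c (G H : digraph d) n (a : G) (a' : H) :
  wl c n.+1 a = wl c n.+1 a' -> wl c n a = wl c n a'.
Proof. by rewrite !wl_succ => -[]. Qed.

Lemma wl_label d c (G H : digraph d) n (a : G) (a' : H) :
  wl c n a = wl c n a' -> label a = label a'.
Proof. elim: n => [//|n IH] /wl_pred; exact: IH. Qed.

Lemma count_enum (T : finType) (p A : pred T) :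
  count p (enum A) = #|[pred x | A x && p x]|.
Proof.
rewrite cardE -!deprecated_filter_index_enum size_filter count_filter.
by apply: eq_count => x; rewrite /= andbC.
Qed.

Lemma card_count (T : finType) (p : pred T) : #|p| = count p (index_enum T).
Proof. by rewrite cardE -deprecated_filter_index_enum size_filter. Qed.

Lemma split5 (T : Type) (f : T -> nat) (p : pred T) (s : seq T) :
  (forall w, f w < 5) ->
  count p s = count p (filter (fun w => f w == 0) s) + count p (filter (fun w => f w == 1) s)
   + count p (filter (fun w => f w == 2) s) + count p (filter (fun w => f w == 3) s)
   + count p (filter (fun w => f w == 4) s).
Proof.
move=> H; elim: s => //= x s ->; have := H x.
case: (f x) => [|[|[|[|[|?]]]]] //= _; case: (p x) => /=; lia.
Qed.

Lemma enum_catp d (G : digraph d) i (b : G) :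
  enum (catp i b) = filter (fun w => tp (edge w b) (edge b w) (w == b) == i) (index_enum G).
Proof. by rewrite -deprecated_filter_index_enum. Qed.

Lemma count_part d c n (G H : digraph d) (b : G) (b' : H) (p : pred G) (p' : pred H) :
 wl c n.+1 b = wl c n.+1 b' ->
 (forall (x : G) (y : H), wl c n x = wl c n y -> edge x b = edge y b' -> edge b x = edge b' y ->
     (x == b) = (y == b') -> p x = p' y) ->
 (forall x x' : G, wl c n x = wl c n x' -> edge x b = edge x' b -> edge b x = edge b x' ->
     (x == b) = (x' == b) -> p x = p x') ->
 (forall y y' : H, wl c n y = wl c n y' -> edge y b' = edge y' b' -> edge b' y = edge b' y' ->
     (y == b') = (y' == b') -> p' y = p' y') ->
 minn c #|p| = minn c #|p'|.
Proof.
move=> E HGH HG HH.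
have E0 := wl_pred E.
rewrite !card_count (split5 p _ (fun w => tp_lt5 (edge w b) (edge b w) (w == b))).
rewrite (split5 p' _ (fun w => tp_lt5 (edge w b') (edge b' w) (w == b'))).
rewrite -!enum_catp.
have C0 : count p (enum (catp 0 b)) = count p' (enum (catp 0 b')).
  rewrite !count_enum.
  have e1 : forall (K : digraph d) (z : K) (q : pred K),
      #|[pred x | catp 0 z x && q x]| = q z.
    move=> K z q; case qz: (q z).
      rewrite /= -(card1 z); apply: eq_card => x; rewrite !inE /catp /tp.
      by case: (eqVneq x z) => [->|_] //=; case: (edge x z); case: (edge z x).
    rewrite /=; apply: eq_card0 => x; rewrite !inE /catp /tp.
    by case: (eqVneq x z) => [->|_] //=; case: (edge x z); case: (edge z x).
  by rewrite !e1 (HGH b b' E0) // ?edge_irr ?eqxx.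
have Ci : forall i, 0 < i < 5 ->
    bmset_of c (wl c n) (catp i b) = bmset_of c (wl c n) (catp i b') ->
    minn c (count p (enum (catp i b))) = minn c (count p' (enum (catp i b'))).
  move=> i /andP[i0 i5] /bmsetP Em.
  apply: (@capcount _ _ _ c _ _ (wl c n) (wl c n)) => //.
  - move=> x y; rewrite !mem_enum /catp /in_mem /= => /eqP xi /eqP yi Exy.
    have [|e1 e2 e3] := tp_inj (etrans xi (esym yi)); first by rewrite xi; case: i i0 i5 {xi yi Em}.
    by apply: HGH.
  - move=> x y; rewrite !mem_enum /catp /in_mem /= => /eqP xi /eqP yi Exy.
    have [|e1 e2 e3] := tp_inj (etrans xi (esym yi)); first by rewrite xi; case: i i0 i5 {xi yi Em}.
    by apply: HG.
  - move=> x y; rewrite !mem_enum /catp /in_mem /= => /eqP xi /eqP yi Exy.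
    have [|e1 e2 e3] := tp_inj (etrans xi (esym yi)); first by rewrite xi; case: i i0 i5 {xi yi Em}.
    by apply: HH.
move: E; rewrite !wl_succ => -[_ E1 E2 E3 E4].
have := Ci 1 erefl E1; have := Ci 2 erefl E2; have := Ci 3 erefl E3; have := Ci 4 erefl E4.
lia.
Qed.

Lemma fwd d c (f : C2form d) : forall n (G H : digraph d) (a b : G) (a' b' : H),
  qdepth f <= n -> counts_le c f -> wl c n a = wl c n a' -> wl c n b = wl c n b' ->
  edge a b = edge a' b' -> edge b a = edge b' a' -> (a == b) = (a' == b') ->
  sat a b f = sat a' b' f.
Proof.
elim: f.
- move=> i z n G H a b a' b' _ _ Ea Eb _ _ _.
  by case: z => /=; rewrite ?(wl_label Ea) ?(wl_label Eb).
- move=> z z' n G H a b a' b' _ _ Ea Eb e1 e2 e3.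
  by case: z; case: z' => /=; rewrite ?edge_irr.
- move=> z z' n G H a b a' b' _ _ Ea Eb e1 e2 e3.
  by case: z; case: z' => /=; rewrite ?eqxx ?e3 // eq_sym e3 eq_sym.
- move=> g IH n G H a b a' b' dn cn Ea Eb e1 e2 e3 /=.
  by rewrite (IH n G H a b a' b').
- move=> g IHg h IHh n G H a b a' b' /=; rewrite geq_max => /andP[dg dh] /andP[cg ch] Ea Eb e1 e2 e3.
  by rewrite (IHg n G H a b a' b') // (IHh n G H a b a' b').
- move=> g IHg h IHh n G H a b a' b' /=; rewrite geq_max => /andP[dg dh] /andP[cg ch] Ea Eb e1 e2 e3.
  by rewrite (IHg n G H a b a' b') // (IHh n G H a b a' b').
- move=> k z g IH [|n] G H a b a' b' // dg cg Ea Eb e1 e2 e3; move/andP: cg => [kc cg].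
  have Ea0 := wl_pred Ea; have Eb0 := wl_pred Eb.
  suff M : forall (X Y : nat), minn c X = minn c Y -> (k <= X) = (k <= Y).
    move: dg; rewrite /= => dg; case: z => /=.
    + apply: M; apply: (count_part Eb).
      * by move=> x y Exy f1 f2 f3; apply: (IH n).
      * by move=> x y Exy f1 f2 f3; apply: (IH n).
      * by move=> x y Exy f1 f2 f3; apply: (IH n).
    + apply: M; apply: (count_part Ea).
      * by move=> x y Exy f1 f2 f3; apply: (IH n) => //; rewrite eq_sym f3 eq_sym.
      * by move=> x y Exy f1 f2 f3; apply: (IH n) => //; rewrite eq_sym f3 eq_sym.
      * by move=> x y Exy f1 f2 f3; apply: (IH n) => //; rewrite eq_sym f3 eq_sym.
  move=> X Y EXY; apply/idP/idP; lia.
Qed.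

Definition swv (z : var) : var := match z with VX => VY | VY => VX end.

Fixpoint swapf d (f : C2form d) : C2form d :=
  match f with
  | CP i z => CP i (swv z)
  | CE z z' => CE d (swv z) (swv z')
  | CEq z z' => CEq d (swv z) (swv z')
  | CNot g => CNot (swapf g)
  | CAnd g h => CAnd (swapf g) (swapf h)
  | COr g h => COr (swapf g) (swapf h)
  | CEx k z g => CEx k (swv z) (swapf g)
  end.

Lemma sat_swap d (G : digraph d) (f : C2form d) : forall (a b : G), sat a b (swapf f) = sat b a f.
Proof.
elim: f => [i z|z z'|z z'|g IH|g IHg h IHh|g IHg h IHh|k z g IH] a b /=.
- by case: z.
- by case: z; case: z'.
- by case: z; case: z'.
- by rewrite IH.
- by rewrite IHg IHh.
- by rewrite IHg IHh.
- by case: z => /=; congr (_ <= _); apply: eq_card => w; rewrite !inE IH.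
Qed.

Lemma qdepth_swap d (f : C2form d) : qdepth (swapf f) = qdepth f.
Proof. by elim: f => //= [g -> h -> | g -> h -> | k z g ->]. Qed.

Lemma counts_swap d c (f : C2form d) : counts_le c (swapf f) = counts_le c f.
Proof. by elim: f => //= [g -> h -> | g -> h -> | k z g ->]. Qed.

Lemma sat_free d (G : digraph d) (f : C2form d) : ~~ free_in VY f ->
  forall (a b b' : G), sat a b f = sat a b' f.
Proof.
elim: f => [i z|z z'|z z'|g IH|g IHg h IHh|g IHg h IHh|k z g IH] /= Hf a b b'.
- by case: z Hf.
- by case: z Hf; case: z'.
- by case: z Hf; case: z'.
- by rewrite (IH Hf a b b').
- by move: Hf; rewrite negb_or => /andP[Hg Hh]; rewrite (IHg Hg a b b') (IHh Hh a b b').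
- by move: Hf; rewrite negb_or => /andP[Hg Hh]; rewrite (IHg Hg a b b') (IHh Hh a b b').
- case: z Hf => //= Hf; congr (_ <= _); apply: eq_card => w; by rewrite !inE (IH Hf w b b').
Qed.

Definition catF d (i : nat) : C2form d :=
  CAnd (CNot (CEq d VY VX))
   (match i with
    | 1 => CAnd (CE d VY VX) (CE d VX VY)
    | 2 => CAnd (CE d VY VX) (CNot (CE d VX VY))
    | 3 => CAnd (CNot (CE d VY VX)) (CE d VX VY)
    | _ => CAnd (CNot (CE d VY VX)) (CNot (CE d VX VY))
    end).
Arguments catF : simpl never.

Lemma sat_catF d (G : digraph d) i (a w : G) : 0 < i < 5 -> sat a w (catF d i) = catp i a w.
Proof.
move=> /andP[i0 i5]; rewrite /catp /tp /catF /=.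
case: (w == a) => //=; first by case: i i0 i5 => [|[|[|[|[|]]]]].
by case: i i0 i5 => [|[|[|[|[|]]]]] //= _ _; case: (edge w a); case: (edge a w).
Qed.

Lemma catF_ok d c i : [&& qdepth (catF d i) == 0, counts_le c (catF d i) & ~~ free_in VY (CEx 0 VY (catF d i))].
Proof. by rewrite /catF; case: i => [|[|[|[|]]]]. Qed.

Lemma unary_lift d c n (f : C2form d) : C2lc_unary n c f -> C2lc_unary n.+1 c f.
Proof. by case/and3P => qn cf fr; apply/and3P; split => //; apply: leqW. Qed.

Lemma F_unary d c n i k (chi : C2form d) : k <= c -> C2lc_unary n c chi ->
  C2lc_unary n.+1 c (CEx k VY (CAnd (catF d i) (swapf chi))).
Proof.
move=> kc /and3P[qn cf fr]; case/and3P: (catF_ok d c i) => /eqP q0 c0 _.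
rewrite /C2lc_unary.
have -> : qdepth (CEx k VY (CAnd (catF d i) (swapf chi))) =
   (maxn (qdepth (catF d i)) (qdepth (swapf chi))).+1 by [].
have -> : counts_le c (CEx k VY (CAnd (catF d i) (swapf chi))) =
   (k <= c) && (counts_le c (catF d i) && counts_le c (swapf chi)) by [].
by rewrite q0 c0 qdepth_swap counts_swap max0n ltnS kc qn cf.
Qed.

Lemma conj_list d c n (G0 : digraph d) (x0 : G0) (G : digraph d) (s : seq G) :
 (forall z : G, exists f, C2lc_unary n c f /\ models1 x0 f /\ (wl c n z != wl c n x0 -> ~~ models1 z f)) ->
 exists chi, C2lc_unary n c chi /\ models1 x0 chi /\
   (forall z, z \in s -> wl c n z != wl c n x0 -> ~~ models1 z chi).
Proof.
move=> H; elim: s => [|y s [chi [u1 [m1 h1]]]].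
  exists (CEq d VX VX); split; first by rewrite /C2lc_unary leq0n.
  by split; [rewrite /models1 /= eqxx | move=> z].
have [f [u2 [m2 h2]]] := H y.
exists (CAnd f chi); split.
  move: u1 u2 => /and3P[q1 c1 f1] /and3P[q2 c2 f2].
  by apply/and3P; split => /=; rewrite ?geq_max ?q1 ?q2 ?c1 ?c2 // negb_or f1 f2.
split; first by rewrite /models1 /= -!/(models1 _ _) m1 m2.
move=> z; rewrite inE => /orP[/eqP ->|zs] ne; rewrite /models1 /= -!/(models1 _ _) negb_and.
  by rewrite h2.
by rewrite h1 ?orbT.
Qed.

Lemma char d c n
  (IH : forall (G H : digraph d) (x : G) (y : H), wl c n x <> wl c n y ->
          exists f, C2lc_unary n c f /\ models1 x f /\ ~~ models1 y f)
  (G0 : digraph d) (x0 : G0) (G H : digraph d) :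
  exists chi, C2lc_unary n c chi /\ (forall z : G, models1 z chi = (wl c n z == wl c n x0)) /\
                                  (forall z : H, models1 z chi = (wl c n z == wl c n x0)).
Proof.
have one : forall K : digraph d, exists chi, C2lc_unary n c chi /\ models1 x0 chi /\
    forall z : K, wl c n z != wl c n x0 -> ~~ models1 z chi.
  move=> K; have [|chi [u [m h]]] := @conj_list d c n G0 x0 K (enum K).
    move=> z; case: (eqVneq (wl c n z) (wl c n x0)) => [e|ne].
      exists (CEq d VX VX); split; first by rewrite /C2lc_unary leq0n.
      by split; [rewrite /models1 /= eqxx | ].
    have [f [u [m h]]] := IH G0 K x0 z (fun e => negP ne (introT eqP (esym e))).
    by exists f; split => //; split => // _.
  by exists chi; split => //; split => // z; apply: h; rewrite mem_enum.
have [c1 [u1 [m1 h1]]] := one G; have [c2 [u2 [m2 h2]]] := one H.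
have u : C2lc_unary n c (CAnd c1 c2).
  move: u1 u2 => /and3P[q1 f1 r1] /and3P[q2 f2 r2].
  by apply/and3P; split => /=; rewrite ?geq_max ?q1 ?q2 ?f1 ?f2 // negb_or r1 r2.
have tr : forall (K : digraph d) (z : K), wl c n z = wl c n x0 -> models1 z (CAnd c1 c2).
  move=> K z e; case/and3P: u => qn cn _.
  rewrite /models1 (fwd qn cn e e) ?edge_irr ?eqxx //.
  by rewrite /= -!/(models1 _ _) m1 m2.
exists (CAnd c1 c2); split => //; split => z.
  case: (eqVneq (wl c n z) (wl c n x0)) => [e|ne]; first by rewrite tr // e eqxx.
  by rewrite /models1 /= -!/(models1 _ _) (negbTE (h1 z ne)).
case: (eqVneq (wl c n z) (wl c n x0)) => [e|ne]; first by rewrite tr // e eqxx.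
by rewrite /models1 /= -!/(models1 _ _) (negbTE (h2 z ne)) andbF.
Qed.

Lemma models1_not d (G : digraph d) (a : G) f : models1 a (CNot f) = ~~ models1 a f.
Proof. by []. Qed.

Lemma rev_cat d c n
  (IH : forall (G H : digraph d) (x : G) (y : H), wl c n x <> wl c n y ->
          exists f, C2lc_unary n c f /\ models1 x f /\ ~~ models1 y f)
  (G H : digraph d) (x : G) (y : H) i : 0 < i < 5 ->
  bmset_of c (wl c n) (catp i x) <> bmset_of c (wl c n) (catp i y) ->
  exists f, C2lc_unary n.+1 c f /\ models1 x f /\ ~~ models1 y f.
Proof.
move=> iok Ne.
set s1 := map (wl c n) (enum (catp i x)); set s2 := map (wl c n) (enum (catp i y)).
have [/hasP [col colin Hcol] | hasN] :=
  boolP (has (fun col => minn c (count_mem col s1) != minn c (count_mem col s2)) (s1 ++ s2)); last first.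
  exfalso; apply: Ne; rewrite /bmset_of; apply/bmsetP => col.
  case: (boolP (col \in s1 ++ s2)) => [cin|cnin].
    by move/hasPn: hasN => /(_ col cin) /negPn /eqP.
  move: cnin; rewrite mem_cat negb_or => /andP[n1 n2].
  by rewrite (count_memPn n1) (count_memPn n2).
suff W : forall (G0 : digraph d) (x0 : G0), col = wl c n x0 ->
    exists f, C2lc_unary n.+1 c f /\ models1 x f /\ ~~ models1 y f.
  by move: colin; rewrite mem_cat => /orP[] /mapP [x0 _ E]; apply: (W _ x0 E).
move=> G0 x0 Ec; rewrite {}Ec in Hcol.
have [chi [u [hG hH]]] := char IH x0 G H.
have fr : ~~ free_in VY chi by case/and3P: u.
have cnt : forall (K : digraph d) (a : K),
    (forall z : K, models1 z chi = (wl c n z == wl c n x0)) ->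
    forall k, models1 a (CEx k VY (CAnd (catF d i) (swapf chi))) =
              (k <= count_mem (wl c n x0) (map (wl c n) (enum (catp i a)))).
  move=> K a hK k; rewrite /models1.
  have -> : sat a a (CEx k VY (CAnd (catF d i) (swapf chi))) =
     (k <= #|[pred w | sat a w (catF d i) && sat a w (swapf chi)]|) by [].
  congr (_ <= _).
  rewrite count_map count_enum; apply: eq_card => w; rewrite !inE.
  by rewrite (sat_catF _ _ iok) sat_swap (sat_free fr w a w) -/(models1 w chi) hK.
rewrite -/s1 -/s2 in cnt.
have c1 := cnt G x hG; have c2 := cnt H y hH.
rewrite -/s1 in c1; rewrite -/s2 in c2.
case: (ltngtP (minn c (count_mem (wl c n x0) s1)) (minn c (count_mem (wl c n x0) s2))) => [lt|gt|eq].
- exists (CNot (CEx (minn c (count_mem (wl c n x0) s2)) VY (CAnd (catF d i) (swapf chi)))).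
  split; first exact: (@F_unary d c n i _ chi (geq_minl _ _) u).
  rewrite !models1_not c1 c2 negbK; split; last by rewrite geq_minr.
  move: lt; set a := count_mem _ s1; set b := count_mem _ s2; move=> lt. apply/negP; lia.
- exists (CEx (minn c (count_mem (wl c n x0) s1)) VY (CAnd (catF d i) (swapf chi))).
  split; first exact: (@F_unary d c n i _ chi (geq_minl _ _) u).
  rewrite c1 c2; split; first by rewrite geq_minr.
  move: gt; set a := count_mem _ s1; set b := count_mem _ s2; move=> gt. apply/negP; lia.
- by rewrite eq eqxx in Hcol.
Qed.

Lemma rev d c n : forall (G H : digraph d) (x : G) (y : H), wl c n x <> wl c n y ->
  exists f, C2lc_unary n c f /\ models1 x f /\ ~~ models1 y f.
Proof.
elim: n => [|n IH] G H x y Ne.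
  have [/existsP [i Hi] | hN] := boolP [exists i, tnth (label x) i != tnth (label y) i]; last first.
    exfalso; apply: Ne; apply: eq_from_tnth => i.
    by move/existsPn: hN => /(_ i) /negPn /eqP.
  case Lx: (tnth (label x) i).
    exists (CP i VX); split => //; split => //.
    by rewrite /models1 /=; move: Hi; rewrite Lx; case: (tnth (label y) i).
  exists (CNot (CP i VX)); split => //; split.
    by rewrite /models1 /= Lx.
  by rewrite /models1 /=; move: Hi; rewrite Lx; case: (tnth (label y) i).
move: Ne; rewrite !wl_succ => Ne.
have [E0|N0] := eqVneq (wl c n x) (wl c n y); last first.
  have [f [u [m h]]] := IH G H x y (fun e => negP N0 (introT eqP e)).
  by exists f; split => //; apply: unary_lift.
have [E1|N1] := eqVneq (bmset_of c (wl c n) (catp 1 x)) (bmset_of c (wl c n) (catp 1 y));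
  last exact: (@rev_cat d c n IH G H x y 1 erefl (fun e => negP N1 (introT eqP e))).
have [E2|N2] := eqVneq (bmset_of c (wl c n) (catp 2 x)) (bmset_of c (wl c n) (catp 2 y));
  last exact: (@rev_cat d c n IH G H x y 2 erefl (fun e => negP N2 (introT eqP e))).
have [E3|N3] := eqVneq (bmset_of c (wl c n) (catp 3 x)) (bmset_of c (wl c n) (catp 3 y));
  last exact: (@rev_cat d c n IH G H x y 3 erefl (fun e => negP N3 (introT eqP e))).
have [E4|N4] := eqVneq (bmset_of c (wl c n) (catp 4 x)) (bmset_of c (wl c n) (catp 4 y));
  last exact: (@rev_cat d c n IH G H x y 4 erefl (fun e => negP N4 (introT eqP e))).
by exfalso; apply: Ne; rewrite E0 E1 E2 E3 E4.
Qed.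

Unset Implicit Arguments.

Theorem theorem1 (d l c : nat) (G H : digraph d) (u : G) (v : H) :
  C2_equiv l c u v <-> wl c l u = wl c l v.
Proof.
split.
  move=> Eq; case: (eqVneq (wl c l u) (wl c l v)) => [//|N].
  have [f [uf [m h]]] := rev (fun e => negP N (introT eqP e)).
  have [H1 _] := Eq f uf.
  by rewrite (H1 m) in h.
move=> E f /and3P[qf cf _]; rewrite /models1 (fwd qf cf E E) ?edge_irr ?eqxx //.
Qed.
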